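(* Let $G$ be a finite group and $H$ a subgroup of $G$. Then $|\mathrm{Solv}(H)| \leq |\mathrm{Solv}(G)|$.
   Context: For a finite group $G$ and $x \in G$, the solvabilizer of $x$ in $G$ is $\mathrm{Sol}_G(x) = \{y \in G : \langle x, y \rangle \text{ is solvable}\}$. $\mathrm{Solv}(G) = \{\mathrm{Sol}_G(x) : x \in G\}$ is the set of distinct solvabilizers of elements of $G$. *)

(* Defs.v *)
From mathcomp Require Import all_boot all_fingroup all_solvable.
Set Implicit Arguments. Unset Strict Implicit. Unset Printing Implicit Defensive.
Local Open Scope group_scope.

Definition solvabilizer (gT : finGroupType) (G : {set gT}) (x : gT) : {set gT} :=
  [set y in G | solvable <<[set x; y]>>].

Definition Solv (gT : finGroupType) (G : {set gT}) : {set {set gT}} :=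
  [set solvabilizer G x | x in G].

(* Main.v *)
Require Import Defs.
From mathcomp Require Import all_boot all_fingroup all_solvable.

Theorem lemma2p4 (gT : finGroupType) (G H : {group gT}) :
  H \subset G -> #|Solv H| <= #|Solv G|.
Proof.
move=> sHG.
apply: leq_trans (leq_imset_card (fun S => S :&: (H : {set gT})) (Solv G)).
apply: subset_leq_card.
apply/subsetP => S /imsetP [x xH ->].
apply/imsetP; exists (solvabilizer G x).
  by apply/imsetP; exists x => //; exact: (subsetP sHG).
apply/setP => y; rewrite !inE.
case yH: (y \in H); rewrite ?andbF ?andbT //=.
by rewrite (subsetP sHG _ yH).
Qed.
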